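(* In the arrow category $\mathrm{Arr}(\mathrm{Ab})$ of abelian groups (i.e. $\mathscr{A}^\mathbb{T}$ with $\mathscr{A}=\mathrm{Ab}$, $\mathbb{T}$ the walking arrow $1\to0$, $\mathbb{S}=\{0\}$, so that $\mathscr{F}$ consists of arrows $0\to A$ and the reflection sends $a:A_1\to A_0$ to $\mathrm{Cok}(a)$), the morphism of arrows $(f_0,f_1)$ from $1_\mathbb{Z}:\mathbb{Z}\to\mathbb{Z}$ to $\mathbb{Z}\to0$ with $f_1=1_\mathbb{Z}$ and $f_0:\mathbb{Z}\to0$ is an extension which is central but not trivial with respect to $\mathscr{F}$. Consequently the torsion class $\mathscr{T}$ of the torsion theory $(\mathscr{T},\mathscr{F})$ in $\mathrm{Arr}(\mathrm{Ab})$ is not closed under regular subobjects.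
   Context: An extension in $\mathrm{Arr}(\mathscr{A})$ from $a:A_1\to A_0$ to $b:B_1\to B_0$ is a commutative square $(f_0,f_1)$ with $f_0,f_1$ regular epimorphisms. It is trivial if the naturality square of the unit of the reflection into $\mathscr{F}$ is a pullback; central if its pullback along some regular epimorphism $p$ is trivial. $\mathscr{T}$ consists of the arrows $a:A_1\to A_0$ that are epimorphisms (the torsion class of the torsion theory whose torsion-free class is $\mathscr{F}$). *)

(* Defs.v *)
From HB Require Import structures.
From mathcomp Require Import all_boot all_algebra ring_quotient.
From mathcomp Require Import boolp.
Set Implicit Arguments. Unset Strict Implicit. Unset Printing Implicit Defensive.
Import GRing.Theory.
Local Open Scope ring_scope.
Local Open Scope quotient_scope.

(* Basic set-level notions in Ab (limits/epis are computed on underlying sets). *)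
Definition surj (X Y : Type) (f : X -> Y) : Prop := forall y, exists x, f x = y.
Definition inj (X Y : Type) (f : X -> Y) : Prop := forall x x', f x = f x' -> x = x'.

Definition is_pullback (P X Y Z : Type) (p1 : P -> X) (p2 : P -> Y)
  (g : X -> Z) (h : Y -> Z) : Prop :=
  (forall p, g (p1 p) = h (p2 p)) /\
  (forall x y, g x = h y -> exists! p, p1 p = x /\ p2 p = y).

Record arr := Arr { arr1 : zmodType; arr0 : zmodType; amap : {additive arr1 -> arr0} }.

Record arr_hom (A B : arr) := ArrHom {
  hom1 : {additive arr1 A -> arr1 B};
  hom0 : {additive arr0 A -> arr0 B};
  hom_comm : forall x, amap B (hom1 x) = hom0 (amap A x) }.

Definition regular_epi A B (f : arr_hom A B) : Prop :=
  surj (hom1 f) /\ surj (hom0 f).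
Definition regular_mono A B (f : arr_hom A B) : Prop :=
  inj (hom1 f) /\ inj (hom0 f).

Definition arr_pullback P X Y Z (p1 : arr_hom P X) (p2 : arr_hom P Y)
  (g : arr_hom X Z) (h : arr_hom Y Z) : Prop :=
  is_pullback (hom1 p1) (hom1 p2) (hom1 g) (hom1 h) /\
  is_pullback (hom0 p1) (hom0 p2) (hom0 g) (hom0 h).

Section Image.
Variables (X Y : zmodType) (f : {additive X -> Y}).
Definition imgp : {pred Y} := fun y => `[< exists x, f x = y >].
Lemma imgp_zmod_closed : zmod_closed imgp.
Proof.
split.
  by apply/asboolP; exists 0; rewrite raddf0.
move=> u v /asboolP [x <-] /asboolP [y <-]; apply/asboolP; exists (x - y).
by rewrite raddfB.
Qed.
HB.instance Definition _ := GRing.isZmodClosed.Build Y imgp imgp_zmod_closed.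
End Image.

Definition coker (A : arr) : zmodType := @Quotient.quot _ (imgp (amap A)).
Definition coker_pi (A : arr) : arr0 A -> coker A := \pi_(coker A).
Arguments coker_pi : clear implicits.

Definition zero_grp : zmodType := 'I_1.

Section ZeroMap.
Variables (X Y : zmodType).
Definition zero_map : X -> Y := fun _ => 0.
Lemma zero_map_additive : zmod_morphism zero_map.
Proof. by move=> x y; rewrite /zero_map subr0. Qed.
HB.instance Definition _ := GRing.isZmodMorphism.Build X Y zero_map
  zero_map_additive.
End ZeroMap.
Arguments zero_map : clear implicits.

Definition reflect_obj (A : arr) : arr :=
  @Arr zero_grp (coker A) (zero_map zero_grp (coker A)).

Lemma coker_pi_additive (A : arr) : zmod_morphism (coker_pi A).
Proof. by move=> x y; rewrite /coker_pi raddfB. Qed.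
Arguments coker_pi_additive : clear implicits.
HB.instance Definition _ (A : arr) :=
  GRing.isZmodMorphism.Build (arr0 A) (coker A) (coker_pi A) (coker_pi_additive A).

Lemma unit_comm (A : arr) x :
  zero_map zero_grp (coker A) (zero_map (arr1 A) zero_grp x) =
  coker_pi A (amap A x).
Proof.
rewrite /zero_map; apply/esym/eqP.
rewrite -(raddf0 (coker_pi A)) /coker_pi -(Quotient.idealrBE (imgp (amap A))) subr0.
by apply/asboolP; exists x.
Qed.

Definition eta (A : arr) : arr_hom A (reflect_obj A) :=
  @ArrHom A (reflect_obj A) (zero_map (arr1 A) zero_grp) (coker_pi A) (@unit_comm A).

Section CokerMap.
Variables (A B : arr) (f : arr_hom A B).
Definition coker_map : coker A -> coker B := fun c => coker_pi B (hom0 f (repr c)).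

Lemma coker_mapE x : coker_map (coker_pi A x) = coker_pi B (hom0 f x).
Proof.
rewrite /coker_map /coker_pi; apply/eqP.
rewrite -(Quotient.idealrBE (imgp (amap B))) -raddfB.
have : repr (\pi_(coker A) x) - x \in imgp (amap A).
  by rewrite (Quotient.idealrBE (imgp (amap A))) reprK.
move/asboolP=> [z <-]; apply/asboolP; exists (hom1 f z); exact: hom_comm.
Qed.

Lemma coker_map_additive : zmod_morphism coker_map.
Proof.
move=> c d.
rewrite -[c]reprK -[d]reprK.
have -> : \pi_(coker A) (repr c) - \pi_(coker A) (repr d) =
          coker_pi A (repr c - repr d) by rewrite /coker_pi raddfB.
by rewrite -!/(coker_pi _ _) !coker_mapE raddfB /coker_pi raddfB.
Qed.
HB.instance Definition _ := GRing.isZmodMorphism.Build (coker A) (coker B)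
  coker_map coker_map_additive.

Lemma reflect_comm x :
  zero_map zero_grp (coker B) (idfun x) = coker_map (zero_map zero_grp (coker A) x).
Proof. by rewrite /zero_map raddf0. Qed.

Definition reflect_hom : arr_hom (reflect_obj A) (reflect_obj B) :=
  @ArrHom (reflect_obj A) (reflect_obj B) idfun coker_map reflect_comm.
End CokerMap.

Definition extension A B (f : arr_hom A B) : Prop := regular_epi f.

Definition trivial_extension A B (f : arr_hom A B) : Prop :=
  extension f /\ arr_pullback f (eta A) (eta B) (reflect_hom f).

Definition central_extension A B (f : arr_hom A B) : Prop :=
  extension f /\
  exists (E : arr) (p : arr_hom E B) (P : arr) (q : arr_hom P A) (f' : arr_hom P E),
    regular_epi p /\ arr_pullback q f' f p /\ trivial_extension f'.

Definition torsionT (A : arr) : Prop := surj (amap A).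

Definition closed_under_regular_subobjects (C : arr -> Prop) : Prop :=
  forall (S A : arr) (m : arr_hom S A), regular_mono m -> C A -> C S.

Definition idZ : arr := @Arr int int idfun.
Definition Zto0 : arr := @Arr int zero_grp (zero_map int zero_grp).

Lemma ex_comm x : zero_map int zero_grp (idfun x) = zero_map int zero_grp (idfun x).
Proof. by []. Qed.

Definition ex_mor : arr_hom idZ Zto0 :=
  @ArrHom idZ Zto0 idfun (zero_map int zero_grp) ex_comm.

(* Main.v *)
Require Import Defs.
From HB Require Import structures.
From mathcomp Require Import all_boot all_algebra ring_quotient.
From mathcomp Require Import boolp ring.
Set Implicit Arguments. Unset Strict Implicit. Unset Printing Implicit Defensive.
Import GRing.Theory.
Local Open Scope ring_scope.
Local Open Scope quotient_scope.

Lemma zg_eq (a b : zero_grp) : a = b.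
Proof. by apply: val_inj; case: a => [[|n] Ha]; case: b => [[|m] Hb]. Qed.

Lemma coker_piE (A : arr) x y :
  coker_pi A x = coker_pi A y <-> exists z, amap A z = x - y.
Proof.
split.
  move=> H; have : x - y \in imgp (amap A).
    by rewrite (Quotient.idealrBE (imgp (amap A))); apply/eqP; exact: H.
  by move/asboolP.
move=> H; apply/eqP; rewrite /coker_pi -(Quotient.idealrBE (imgp (amap A))).
by apply/asboolP.
Qed.

Lemma coker_surj (A : arr) (a : coker A) : exists x, a = coker_pi A x.
Proof. by exists (repr a); rewrite /coker_pi reprK. Qed.

Lemma coker_idZ (a b : coker idZ) : a = b.
Proof.
have [x ->] := coker_surj a; have [y ->] := coker_surj b.
by apply/coker_piE; exists (x - y).
Qed.

Definition diag (x : int) : int * int := (x, x).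
Lemma diag_add : zmod_morphism diag. Proof. by []. Qed.
HB.instance Definition _ := GRing.isZmodMorphism.Build int (int * int)%type diag diag_add.

Definition fstZ (x : int * int) : int := x.1.
Lemma fstZ_add : zmod_morphism fstZ. Proof. by []. Qed.
HB.instance Definition _ := GRing.isZmodMorphism.Build (int * int)%type int fstZ fstZ_add.

Definition sndZ (x : int * int) : int := x.2.
Lemma sndZ_add : zmod_morphism sndZ. Proof. by []. Qed.
HB.instance Definition _ := GRing.isZmodMorphism.Build (int * int)%type int sndZ sndZ_add.

Definition Pobj : arr := @Arr int (int * int)%type diag.

Lemma q_comm x : amap idZ (idfun x) = fstZ (amap Pobj x). Proof. by []. Qed.
Definition qm : arr_hom Pobj idZ := @ArrHom Pobj idZ idfun fstZ q_comm.
Lemma f'_comm x : amap idZ (idfun x) = sndZ (amap Pobj x). Proof. by []. Qed.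
Definition f'm : arr_hom Pobj idZ := @ArrHom Pobj idZ idfun sndZ f'_comm.
Lemma p_comm x : amap Zto0 (idfun x) = zero_map int zero_grp (amap idZ x). Proof. by []. Qed.
Definition pm : arr_hom idZ Zto0 := @ArrHom idZ Zto0 idfun (zero_map int zero_grp) p_comm.

Definition Sobj : arr := @Arr zero_grp int (zero_map zero_grp int).
Lemma m_comm x : amap idZ (zero_map zero_grp int x) = idfun (amap Sobj x). Proof. by []. Qed.
Definition mm : arr_hom Sobj idZ := @ArrHom Sobj idZ (zero_map zero_grp int) idfun m_comm.

Lemma ext_ex : extension ex_mor.
Proof. by split => y; [exists y | exists 0; apply: zg_eq]. Qed.

Theorem mainTheorem5 :
  (extension ex_mor /\ central_extension ex_mor /\ ~ trivial_extension ex_mor) /\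
  ~ closed_under_regular_subobjects torsionT.
Proof.
split; last first.
  move=> H.
  have Hs : torsionT Sobj.
    apply: (H Sobj idZ mm); last by move=> y; exists y.
    by split => x y //= _; apply: zg_eq.
  have [x Hx] := Hs 1.
  by move: Hx; rewrite /= /zero_map => /eqP; rewrite eq_sym oner_eq0.
split; first exact: ext_ex.
split.
  split; first exact: ext_ex.
  exists idZ, pm, Pobj, qm, f'm.
  split; first by split => y; [exists y | exists 0; apply: zg_eq].
  split.
    split; split => //= x y Hxy.
      by exists x; split => // p [].
    by exists (x, y); split => // -[a b] [/= -> ->].
  split; first by split => y; [exists y | exists (0, y)].
  split; split.
  - by move=> p; apply: zg_eq.
  - move=> x y _; exists x; split; first by split => //; apply: zg_eq.
    by move=> p [].
  - by move=> p; apply: coker_idZ.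
  - move=> x y _; have [[r1 r2] ->] := coker_surj y.
    set r := (r1, r2).
    exists (r.1 - r.2 + x, x); split.
      split => //.
      change (coker_pi Pobj (r.1 - r.2 + x, x) = coker_pi Pobj r); apply/coker_piE; exists (x - r.2).
      rewrite /= /diag; by congr pair => /=; ring.
    move=> [a b] [/= Hb Hp]; subst b.
    have [z Ez] : exists z, amap Pobj z = (a, x) - r := proj1 (@coker_piE Pobj _ _) Hp.
    move: Ez; rewrite /= /diag => -[E1 E2].
    congr pair; rewrite /= in E1 E2.
    have -> : a = z + r1 by rewrite E1; ring.
    by rewrite E2; ring.
move=> [_ [_ [_ H]]].
have [//|p [_ U]] := H 0 0.
have U0 := U 0; have U1 := U 1.
suff : (0 : int) = 1 by [].
rewrite -U0 ?U1 //.
- split; first by apply: zg_eq.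
  by apply: coker_idZ.
- split; first by apply: zg_eq.
  by apply: coker_idZ.
Qed.
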